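(* Let $f_c=S_0+\sum_{n\ge1}S_nS_0^{\,n+1}$, an element of the Schröder group $G_{\mathcal S}$, and let $g_c$ be its inverse in $G_{\mathcal S}$ for the composition $\circ$. Write $g_c=\eta\, S_0$ with $\eta\in\mathbb{C}\langle\langle S_0,S_1,\dots\rangle\rangle$, and define $\kappa:=\eta^{-1}S_0$, where $\eta^{-1}$ is the multiplicative inverse of $\eta$ in $\mathbb{C}\langle\langle S_0,S_1,\dots\rangle\rangle$. Then: (a) the image of $\kappa$ under the substitution $S_0\mapsto 1$, $S_n\mapsto S_n$ ($n\ge 1$) is the series $K=1+\sum_{n\ge1}K_n$ of $\widehat{\mathbf{Sym}}$; (b) for every $n\ge1$, the sum $\kappa_n$ of all terms of $\kappa$ of weight $n$ is $$\kappa_n=\sum_{t\in \mathrm{PST}_n}(-1)^{i(t)-1}S^t .$$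
   Context: A reduced plane tree is a rooted plane (ordered) tree in which every internal node has at least two children; the one-vertex tree (a single leaf) is allowed. Its degree is its number of leaves, its weight is the degree minus 1, and $i(t)$ denotes the number of internal nodes of $t$. Let $\mathbb{C}\langle\langle S_0,S_1,\dots\rangle\rangle$ be the algebra of formal (possibly infinite) linear combinations of words in noncommuting letters $S_0,S_1,\dots$ (products are well defined since a word has finitely many factorizations); the weight of a word $S_{i_1}\cdots S_{i_r}$ is $i_1+\dots+i_r$. To a reduced plane tree $t$ associate the word $S^t$ obtained by reading the nodes in preorder (root first, then the subtrees from left to right, recursively), writing $S_{k-1}$ for a node with $k$ children (so a leaf is $S_0$); the weight of $S^t$ equals the weight of $t$, and every $S^t$ ends with $S_0$. For trees $t_0$ with $n$ leaves and $t_1,\dots,t_n$, $t_0\circ(t_1,\dots,t_n)$ is the tree obtained by replacing the leaves of $t_0$, from left to right, by $t_1,\dots,t_n$; this is extended multilinearly to series. The Schröder group $G_{\mathcal S}$ is the set of series $p=S_0+\sum_{n\ge2}p_n$ with $p_n$ a finite linear combination of words $S^t$ for trees $t$ with $n$ leaves, with product $p\circ q=q+\sum_{n\ge2}p_n\circ(q,\dots,q)$; it is a group with identity $S_0$. A reduced plane tree with at least two leaves is prime if the rightmost child of its root is a leaf; $\mathrm{PST}_n$ is the set of prime reduced plane trees of weight $n$. $\mathbf{Sym}$ is the free associative algebra over $\mathbb{C}$ on $S_1,S_2,\dots$ ($\deg S_n=n$), $\widehat{\mathbf{Sym}}$ its completion, $S_0=1$, $\sigma_1=\sum_{n\ge0}S_n$,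 and $K_n$ are the unique homogeneous elements of degree $n$ with $K_0=1$ and $\sigma_1=\sum_{n\ge0}K_n\sigma_1^{\,n}$. *)

(* Defs.v *)
(* Coefficient field: algC (algebraic complex numbers);
   all coefficients involved are integers. *)
From mathcomp Require Import all_boot all_order all_algebra algC.
From Stdlib Require List.
Set Implicit Arguments. Unset Strict Implicit. Unset Printing Implicit Defensive.
Import GRing.Theory Num.Theory.
Local Open Scope ring_scope.

(* A word S_{i1} ... S_{ir} is the list [:: i1; ...; ir]; its weight is sumn. *)
Definition ser := seq nat -> algC.

Definition ser_one : ser := fun w => (w == [::])%:R.
Definition letter (a : nat) : ser := fun w => (w == [:: a])%:R.
Definition ser_mul (a b : ser) : ser :=
  fun w => \sum_(i < (size w).+1) a (take i w) * b (drop i w).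
Definition ser_pow (a : ser) (n : nat) : ser := iter n (ser_mul a) ser_one.
Definition homc (n : nat) (a : ser) : ser :=
  fun w => if sumn w == n then a w else 0.

Inductive tree := Node of seq tree.

Fixpoint reduced (t : tree) : bool :=
  let: Node ts := t in ((size ts == 0%N) || (1 < size ts)%N) && all reduced ts.
Fixpoint leaves (t : tree) : nat :=
  let: Node ts := t in if ts is [::] then 1%N else sumn (map leaves ts).
Fixpoint internal (t : tree) : nat :=
  let: Node ts := t in if ts is [::] then 0%N else (sumn (map internal ts)).+1.
Definition tweight (t : tree) : nat := (leaves t).-1.
Fixpoint tword (t : tree) : seq nat :=
  let: Node ts := t in (size ts).-1 :: flatten (map tword ts).

Definition is_leaf (t : tree) : bool := let: Node ts := t in size ts == 0%N.
Definition prime_tree (t : tree) : bool :=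
  let: Node ts := t in
  (2 <= leaves t)%N && (0 < size ts)%N && is_leaf (last (Node [::]) ts).
Definition PST (n : nat) (t : tree) : Prop :=
  reduced t /\ prime_tree t /\ tweight t = n.

(* p = S_0 + sum_{n>=2} p_n with p_n a (necessarily finite) combination of
   words S^t of reduced trees with n leaves *)
Definition in_GS (p : ser) : Prop :=
  p [:: 0%N] = 1 /\
  forall w, p w != 0 -> exists t, reduced t /\ tword t = w.

(* Composition p o q = q + sum_{n>=2} p_n o (q,...,q), where grafting
   t0 o (t1,...,tn) is, on preorder words, the replacement of the k-th
   letter S_0 of S^{t0} by S^{tk}.  By multilinearity the coefficient of x in
   p o q is the sum over words w and factorizations of x obtained by replacing
   each S_0 of w by a nonempty word u, of p(w) * prod q(u).  This is computed
   by recursion on the first letter of w (fuel = length of x). *)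
Fixpoint subst_coef (k : nat) (p q : ser) (x : seq nat) : algC :=
  match k with
  | 0%N => 0
  | k'.+1 =>
    match x with
    | [::] => p [::]
    | b :: x' =>
        (if b != 0%N then subst_coef k' (fun w => p (b :: w)) q x' else 0)
        + \sum_(i < size x)
            q (take i.+1 x) * subst_coef k' (fun w => p (0%N :: w)) q (drop i.+1 x)
    end
  end.
Definition gcomp (p q : ser) : ser := fun x => subst_coef (size x).+1 p q x.

(* f_c = S_0 + sum_{n>=1} S_n S_0^{n+1} *)
Definition fc : ser := fun w =>
  (if w is n :: r then (if n == 0%N then r == [::] else r == nseq n.+1 0%N)
   else false)%:R.

(* g = eta S_0  determines eta uniquely *)
Definition eta_of (g : ser) : ser := fun w => g (rcons w 0%N).
Definition kappa_of (etainv : ser) : ser := ser_mul etainv (letter 0).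

Definition pos_word (u : seq nat) : bool := all (fun a => 0 < a)%N u.
(* sigma_1 = sum_{n>=0} S_n with S_0 = 1 *)
Definition sigma1 : ser := fun u => (size u <= 1)%N%:R.
(* K = sum_n K_n with K_n homogeneous of degree n, K_0 = 1 and
   sigma_1 = sum_n K_n sigma_1^n (on a word of degree d only n <= d contribute) *)
Definition K_def (K : ser) : Prop :=
  K [::] = 1 /\
  forall u, pos_word u ->
    sigma1 u = \sum_(n < (sumn u).+1) ser_mul (homc n K) (ser_pow sigma1 n) u.

(* The image of a under S_0 |-> 1, S_n |-> S_n (n >= 1) is well defined and
   equals K: for every word u in S_1,S_2,..., the words w of a's support that
   map to u form a finite set, and their coefficients sum to K(u). *)
Definition specializes_to (a K : ser) : Prop :=
  forall u, pos_word u ->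
    exists s : seq (seq nat),
      (forall w, filter (fun c => 0 < c)%N w = u -> a w != 0 -> w \in s) /\
      uniq s /\
      K u = \sum_(w <- s | filter (fun c => 0 < c)%N w == u) a w.

(* Main.v *)
Require Import Defs.
From mathcomp Require Import all_boot all_order all_algebra algC.
From Stdlib Require List.
From Stdlib Require Import ClassicalEpsilon.
From mathcomp Require Import zify.
Import GRing.Theory Num.Theory.
Local Open Scope ring_scope.
Set Implicit Arguments. Unset Strict Implicit. Unset Printing Implicit Defensive.

Definition nxt (c a : nat) : nat := if a == 0%N then c.-1 else (c + a)%N.
Fixpoint luk (c : nat) (w : seq nat) : bool :=
  match w with
  | [::] => c == 0%N
  | a :: w' => (c != 0%N) && luk (nxt c a) w'
  end.

Lemma nxt_add c d a : c != 0%N -> nxt (c + d) a = (nxt c a + d)%N.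
Proof. rewrite /nxt; case: (a == 0%N) => cn0 //; lia. Qed.

Lemma luk0 w : luk 0 w = (w == [::]).
Proof. by case: w. Qed.

Lemma natr_and (b1 b2 : bool) : ((b1 && b2)%:R : algC) = b1%:R * b2%:R.
Proof. by case: b1; case: b2; rewrite /= ?mulr1 ?mulr0. Qed.

Lemma luk_split c d x :
  \sum_(i < (size x).+1) ((luk c (take i x) && luk d (drop i x))%:R : algC)
  = (luk (c + d) x)%:R.
Proof.
elim: x c => [|a x IH] c.
  by rewrite big_ord_recl big_ord0 /= addr0 addn_eq0.
rewrite big_ord_recl /=.
under eq_bigr => i _ do rewrite add0n.
case: (eqVneq c 0%N) => [->|cn0] /=.
  rewrite big1 ?addr0 // => i _; by rewrite andFb.
rewrite add0r IH nxt_add //.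
have -> : (c + d != 0)%N by lia.
by [].
Qed.

Lemma luk_cat c d y z : luk c y -> luk d z -> luk (c + d) (y ++ z).
Proof.
elim: y c => [|a y IH] c /=; first by move/eqP->.
case/andP=> cn0 hy hz; rewrite nxt_add //.
have -> : (c + d != 0)%N by lia.
by rewrite IH.
Qed.

Lemma luk_pref c y z : luk c y -> luk c (y ++ z) -> z = [::].
Proof.
elim: y c => [|a y IH] c /=; first by move/eqP->; rewrite luk0 => /eqP.
by case/andP=> _ h1 /andP [_ h2]; exact: IH h1 h2.
Qed.

Lemma luk_last c v b : luk c (rcons v b) -> b = 0%N.
Proof.
elim: v c => [|a v IH] c /=; last by case/andP=> _; exact: IH.
rewrite /nxt; case/andP => cn0; case: (eqVneq b 0%N) => // bn0 /eqP; lia.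
Qed.

Lemma luk_zeros c w : luk c w -> count (fun a => a == 0%N) w = (c + sumn w)%N.
Proof.
elim: w c => [|a w IH] c /=; first by move/eqP->.
case/andP=> cn0 /IH /= ->; rewrite /nxt; case: (eqVneq a 0%N) => [->|an0] /=; lia.
Qed.

Lemma size_le (w : seq nat) : (size w <= count (fun a => a == 0%N) w + sumn w)%N.
Proof. elim: w => [|a w IH] //=; move: IH => /= IH; case: (eqVneq a 0%N) => [->|an0] /=; lia. Qed.

Lemma letters_le (w : seq nat) k : all (fun a => a <= sumn w + k)%N w.
Proof.
elim: w k => [|a w IH] k //=; apply/andP; split; first lia.
apply: sub_all (IH (a + k)%N) => x /=; lia.
Qed.

Lemma luk_nseq m k : luk m (nseq k 0%N) = (k == m).
Proof.
elim: k m => [|k IH] m /=; first by rewrite eq_sym.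
rewrite IH /nxt /=; case: m => [|m] //=.
Qed.

Definition pos (c : nat) : bool := (0 < c)%N.
Definition sgn (w : seq nat) : algC := (-1) ^+ count pos w.
Lemma sgn_cat x y : sgn (x ++ y) = sgn x * sgn y.
Proof. by rewrite /sgn count_cat exprD. Qed.
Lemma sgn_take_drop i x : sgn (take i x) * sgn (drop i x) = sgn x.
Proof. by rewrite -sgn_cat cat_take_drop. Qed.
Lemma sgn_rcons0 v : sgn (rcons v 0%N) = sgn v.
Proof. by rewrite -cats1 sgn_cat /sgn /= mulr1. Qed.
Lemma sgn_nil : sgn [::] = 1. Proof. by []. Qed.

Lemma big_recl_nat (F : nat -> algC) n :
  \sum_(i < n.+1) F i = F 0%N + \sum_(i < n) F i.+1.
Proof. by rewrite big_ord_recl; congr (_ + _); apply: eq_bigr => i _; rewrite lift0. Qed.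
Lemma big_recr_nat (F : nat -> algC) n :
  \sum_(i < n.+1) F i = \sum_(i < n) F i + F n.
Proof. by rewrite big_ord_recr. Qed.

Lemma sc_zero k p q x : (forall w, p w = 0) -> subst_coef k p q x = 0.
Proof.
elim: k p x => [|k IH] p x hp //=.
case: x => [|b x] //=.
rewrite big1 ?addr0.
  by case: (b != 0%N) => //; apply: IH.
by move=> i _; rewrite IH ?mulr0.
Qed.

Lemma pow_ext (f h : ser) m y :
  (forall w, (size w <= size y)%N -> f w = h w) -> ser_pow f m y = ser_pow h m y.
Proof.
elim: m y => [|m IH] y hy //=.
rewrite /ser_mul; apply: eq_bigr => i _.
rewrite hy ?size_take_min ?geq_minr //; congr (_ * _).
apply: IH => w hw; apply: hy; apply: leq_trans hw _; rewrite size_drop; lia.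
Qed.

Lemma sc_pow (g : ser) : g [::] = 0 -> forall m k x p,
  (forall w, p w = (w == nseq m 0%N)%:R) -> (size x < k)%N ->
  subst_coef k p g x = ser_pow g m x.
Proof.
move=> g0; elim=> [|m IH] [|k] x p hp //= hk.
- case: x hk => [|b x] hk /=; first by rewrite hp.
  rewrite sc_zero; last by move=> w; rewrite hp.
  rewrite big1; last by move=> i _; rewrite sc_zero ?mulr0 // => w; rewrite hp.
  by rewrite if_same addr0.
- case: x hk => [|b x] hk /=.
    by rewrite hp /ser_mul big_ord_recl big_ord0 /= g0 mul0r addr0.
  rewrite [ser_mul _ _ _]big_ord_recl /= g0 mul0r add0r.
  rewrite (_ : (if b != 0%N then _ else 0) = 0); last first.
    case: eqP => //= bn0; rewrite sc_zero // => w; rewrite hp.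
    by case: eqP => // -[].
  rewrite add0r; apply: eq_bigr => i _ /=; rewrite ?add0n; congr (_ * _).
  apply: IH => [w|]; first by rewrite hp.
  rewrite size_drop /=; move: hk => /=; lia.
Qed.

Lemma g_nil (g : ser) : in_GS g -> g [::] = 0.
Proof.
case=> _ hg; apply/eqP; apply: contraT => /hg [[ts] [_]] //.
Qed.

Lemma sc_cons k p q b x : subst_coef k.+1 p q (b :: x) =
  (if b != 0%N then subst_coef k (fun w => p (b :: w)) q x else 0) +
  \sum_(i < size (b :: x)) q (take i.+1 (b :: x)) * subst_coef k (fun w => p (0%N :: w)) q (drop i.+1 (b :: x)).
Proof. by []. Qed.

Lemma sum_last (F : ser) n (y : seq nat) : size y = n.+1 ->
  \sum_(i < n.+1) F (take i.+1 y) * ser_pow F 0 (drop i.+1 y) = F y.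
Proof.
move=> hy; rewrite big_ord_recr /= big1 ?add0r.
  by rewrite take_oversize ?drop_oversize ?hy // /ser_one /= mulr1.
move=> i _; rewrite /ser_one.
have -> : (drop i.+1 y == [::]) = false.
  by apply/negbTE; rewrite -size_eq0 size_drop hy; have := ltn_ord i; lia.
by rewrite mulr0.
Qed.

Lemma gcomp_fc (g : ser) b x : g [::] = 0 ->
  gcomp fc g (b :: x) = g (b :: x) + (if b != 0%N then ser_pow g b.+1 x else 0).
Proof.
move=> g0; rewrite /gcomp sc_cons addrC; congr (_ + _).
  rewrite (eq_bigr (fun i : 'I_(size (b :: x)) => g (take i.+1 (b :: x)) * ser_pow g 0 (drop i.+1 (b :: x)))); last first.
    by move=> i _; rewrite (sc_pow g0 (m := 0)) // size_drop /=; lia.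
  by apply: sum_last.
case: (eqVneq b 0%N) => // bn0; apply: (sc_pow g0) => [w|].
  by rewrite /fc (negbTE bn0).
by [].
Qed.

Definition Gs : ser := fun w => sgn w * (luk 1 w)%:R.

Lemma powG m x : ser_pow Gs m x = sgn x * (luk m x)%:R.
Proof.
elim: m x => [|m IH] x /=.
  by rewrite luk0 /ser_one; case: eqP => [->|]; rewrite ?sgn_nil ?mul1r ?mulr0.
rewrite /ser_mul.
under eq_bigr => i _ do rewrite IH /Gs mulrACA sgn_take_drop -natr_and.
by rewrite -mulr_sumr luk_split.
Qed.

Lemma g_is_G (g : ser) : in_GS g ->
  (forall w, gcomp fc g w = letter 0 w) -> forall w, g w = Gs w.
Proof.
move=> hGS hfc.
have g0 := g_nil hGS.
suff H : forall n w, (size w <= n)%N -> g w = Gs w by move=> w; apply: (H (size w)).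
elim=> [|n IH] [|b x] //= hs; rewrite ?g0 /Gs /= ?mulr0 //.
have := hfc (b :: x); rewrite gcomp_fc // => /(canRL (addrK _)) ->.
rewrite /letter /nxt; case: (eqVneq b 0%N) => [->|bn0] /=.
  rewrite subr0 luk0 /sgn /=.
  by case: x {hs IH} => [|c x] /=; rewrite ?mulr1 ?mulr0 ?expr0.
have -> : (b :: x == [:: 0%N]) = false by apply/eqP => -[] e; move/eqP: bn0.
rewrite sub0r (_ : ser_mul g (ser_pow g b) x = ser_pow g b.+1 x) //.
rewrite (pow_ext (h := Gs)); last first.
  by move=> w hw; apply: IH; lia.
rewrite powG /sgn /= add1n.
have -> : pos b by rewrite /pos; lia.
by rewrite add1n exprS mulN1r mulNr.
Qed.

Definition prim (w : seq nat) : bool :=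
  if w is a :: u then (a != 0%N) && luk a u else false.
Definition Qs : ser := fun w => (w == [::])%:R - sgn w * (prim w)%:R.
Definition Es : ser := fun w => sgn w * (luk 1 (rcons w 0%N))%:R.
Definition pw (w : seq nat) : bool := (last 1%N w == 0%N) && prim (take (size w).-1 w).

Lemma pw_rcons v b : pw (rcons v b) = (b == 0%N) && prim v.
Proof. by rewrite /pw last_rcons size_rcons /= -cats1 take_size_cat. Qed.

Lemma luk_split_n c d x n : size x = n ->
  \sum_(i < n.+1) ((luk c (take i x) && luk d (drop i x))%:R : algC)
  = (luk (c + d) x)%:R.
Proof. by move<-; apply: luk_split. Qed.

Lemma rcons_neq0 (v : seq nat) b : (rcons v b == [::]) = false.
Proof. by case: v. Qed.

Lemma prim_split (w : seq nat) : w != [::] ->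
  \sum_(i < (size w).+1) ((prim (take i w) && luk 1 (rcons (drop i w) 0%N))%:R : algC)
  = (luk 1 (rcons w 0%N))%:R.
Proof.
case: w => [|a w] // _.
rewrite big_ord_recl /= add0r.
under eq_bigr => i _ do rewrite add0n.
rewrite /nxt; case: (eqVneq a 0%N) => [->|an0] /=.
  by rewrite luk0 rcons_neq0 big1.
have := luk_split_n a 1 (size_rcons w 0%N).
rewrite big_ord_recr /= drop_oversize ?size_rcons // andbF addr0 addn1 add1n => <-.
apply: eq_bigr => i _.
have hi : (i <= size w)%N by have := ltn_ord i; lia.
rewrite drop_rcons // (_ : take i (rcons w 0%N) = take i w) //.
by rewrite -cats1 takel_cat.
Qed.

Lemma ser_mul_last (X Y : ser) w :
  ser_mul X Y w = \sum_(i < size w) X (take i w) * Y (drop i w) + X w * Y [::].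
Proof. by rewrite /ser_mul big_ord_recr /= take_size drop_size. Qed.

Lemma QE (w : seq nat) : ser_mul Qs Es w = ser_one w.
Proof.
rewrite /ser_mul.
under eq_bigr => i _ do rewrite /Qs mulrBl.
rewrite sumrB (big_recl_nat (fun i => (take i w == [::])%:R * Es (drop i w))) /= take0 mul1r drop0.
rewrite big1; last first.
  move=> i _; have : (0 < size (take i.+1 w))%N.
    by rewrite size_take; have := ltn_ord i; case: ifP; lia.
  by case: (take _ w) => // c v _; rewrite mul0r.
rewrite addr0.
under eq_bigr => i _ do rewrite /Es mulrACA sgn_take_drop -natr_and.
rewrite -mulr_sumr.
case: w => [|a w].
  by rewrite big_ord_recl big_ord0 /Es /ser_one /= addr0 mulr0 subr0 mulr1.
by rewrite prim_split // /Es subrr /ser_one.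
Qed.

Lemma E_eta (g : ser) : in_GS g -> (forall w, gcomp fc g w = letter 0 w) ->
  forall w, eta_of g w = Es w.
Proof.
move=> h1 h2 w; rewrite /eta_of (g_is_G h1 h2) /Gs /Es.
by rewrite -cats1 sgn_cat /sgn /= mulr1.
Qed.

Lemma etainv_Q (g etainv : ser) : in_GS g -> (forall w, gcomp fc g w = letter 0 w) ->
  (forall w, ser_mul etainv (eta_of g) w = ser_one w) -> forall w, etainv w = Qs w.
Proof.
move=> h1 h2 h3.
have E1 : Es [::] = 1 by rewrite /Es /= mulr1.
suff H : forall n w, (size w <= n)%N -> etainv w = Qs w by move=> w; apply: (H (size w)).
elim=> [|n IH] w hw.
  have -> : w = [::] by case: w hw.
  have := h3 [::]; rewrite /ser_mul big_ord_recl big_ord0 addr0 /= E_eta // E1 mulr1 => ->.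
  have := QE [::]; rewrite /ser_mul big_ord_recl big_ord0 addr0 /= E1 mulr1 => ->.
  by [].
have := h3 w; rewrite ser_mul_last (eq_bigr (fun i : 'I_(size w) => Qs (take i w) * Es (drop i w))); last first.
  move=> i _; rewrite IH ?E_eta //; rewrite size_take; have := ltn_ord i; case: ifP; lia.
rewrite E_eta // E1 mulr1 => /(canRL (addKr _)) ->.
have := QE w; rewrite ser_mul_last E1 mulr1 => /(canRL (addKr _)) ->.
by [].
Qed.

Lemma sgn_rcons (v : seq nat) b : sgn (rcons v b) = sgn v * (-1) ^+ pos b.
Proof. by rewrite -cats1 sgn_cat /sgn /= addn0. Qed.

Lemma kap_formula (w : seq nat) :
  ser_mul Qs (letter 0) w = (w == [:: 0%N])%:R - sgn w * (pw w)%:R.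
Proof.
case/lastP: w => [|v b].
  by rewrite /ser_mul big_ord_recl big_ord0 /letter /pw /= !mulr0 subr0 addr0.
rewrite /ser_mul.
have hi : (size v < (size (rcons v b)).+1)%N by rewrite size_rcons; lia.
rewrite (bigD1 (Ordinal hi)) //= big1; last first.
  move=> i /eqP ne; rewrite /letter.
  case: eqP => [e|]; last by rewrite mulr0.
  exfalso; apply: ne; apply: val_inj => /=.
  have := congr1 size e; rewrite size_drop /=.
  move: (nat_of_ord i) (ltn_ord i) => k; rewrite size_rcons; lia.
rewrite addr0 -cats1 take_size_cat // drop_size_cat // cats1 /letter pw_rcons.
case: (eqVneq b 0%N) => [->|bn0].
  rewrite mulr1 sgn_rcons0 /Qs /=.
  by case: v {hi} => [|c v] //=; rewrite eqseq_cons rcons_neq0 andbF.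
rewrite eqseq_cons andbT (negbTE bn0) mulr0 /=.
have -> : (rcons v b == [:: 0%N]) = false.
  apply/negbTE; apply: contra bn0 => /eqP/(congr1 (last 1%N)); rewrite last_rcons => ->.
  by [].
by rewrite mulr0 subr0.
Qed.

Definition twl (ts : seq tree) : seq nat := flatten (map tword ts).
Arguments twl : simpl never.

Lemma twl_nil : twl [::] = [::]. Proof. by []. Qed.
Lemma twl_node cs u : twl (Node cs :: u) = (size cs).-1 :: twl (cs ++ u).
Proof. by rewrite /twl map_cat flatten_cat. Qed.
Lemma twl_cat s t : twl (s ++ t) = twl s ++ twl t.
Proof. by rewrite /twl map_cat flatten_cat. Qed.
Lemma twl1 t : twl [:: t] = tword t.
Proof. by rewrite /twl /= cats0. Qed.
Lemma tword_node cs : tword (Node cs) = (size cs).-1 :: twl cs.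
Proof. by []. Qed.
Lemma twl_eq0 cs : size (twl cs) = 0%N -> cs = [::].
Proof. by case: cs => [|[c] u] //; rewrite twl_node. Qed.

Lemma nxt_red k m : (k == 0%N) || (1 < k)%N -> nxt m.+1 k.-1 = (k + m)%N.
Proof.
rewrite /nxt; case: k => [|[|k]] //= _; lia.
Qed.

Lemma luk_twl n ts : (size (twl ts) <= n)%N -> all reduced ts -> luk (size ts) (twl ts).
Proof.
elim: n ts => [|n IH] [|[cs] u] hs hr //; rewrite twl_node in hs *.
move: hr => /= /andP [/andP [hk hcs] hu].
rewrite nxt_red // -size_cat.
apply: IH; first by move: hs => /=; lia.
by rewrite all_cat hcs hu.
Qed.

Lemma sumn_twl n ts : (size (twl ts) <= n)%N ->
  (sumn (twl ts) + size ts = sumn (map leaves ts))%N.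
Proof.
elim: n ts => [|n IH] [|[cs] u] hs //; rewrite twl_node in hs *.
have := IH (cs ++ u); rewrite map_cat sumn_cat size_cat => h.
have {h} h := h ltac:(move: hs => /=; lia).
case: cs h {hs} => [|c cs] /= h; lia.
Qed.

Lemma nz_twl n ts : (size (twl ts) <= n)%N -> all reduced ts ->
  count pos (twl ts) = sumn (map internal ts).
Proof.
elim: n ts => [|n IH] [|[cs] u] hs hr //; rewrite twl_node in hs *.
move: hr => /= /andP [/andP [hk hcs] hu].
have := IH (cs ++ u); rewrite map_cat sumn_cat => h.
have {h} h := h ltac:(move: hs => /=; lia) ltac:(by rewrite all_cat hcs hu).
by rewrite h; case: cs hk {hs hcs h} => [|c [|c' cs]] //= _.
Qed.

Lemma twl_inj n ts ts' r r' : (size (twl ts) <= n)%N -> size ts = size ts' ->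
  all reduced ts -> all reduced ts' -> twl ts ++ r = twl ts' ++ r' -> ts = ts' /\ r = r'.
Proof.
elim: n ts ts' r r' => [|n IH] [|[cs] u] [|[cs'] u'] r r' hs hsz hr hr' e //.
rewrite !twl_node /= in e hs.
case: e => e1 e2.
move: hr hr' => /= /andP [/andP [hk hcs] hu] /andP [/andP [hk' hcs'] hu'].
have ec : size cs = size cs'.
  move: hk hk' e1; case: (size cs) => [|[|k]]; case: (size cs') => [|[|k']] //=.
  by move=> _ _ ->.
have hsz' : size u = size u' by move: hsz => /= [].
have [e3 e4] : cs ++ u = cs' ++ u' /\ r = r'.
  apply: IH.
  - by move: hs; lia.
  - by rewrite !size_cat ec hsz'.
  - by rewrite all_cat hcs hu.
  - by rewrite all_cat hcs' hu'.
  exact: e2.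
split=> //.
have e5 := congr1 (take (size cs)) e3; rewrite take_size_cat // ec take_size_cat // in e5.
have e6 := congr1 (drop (size cs)) e3; rewrite drop_size_cat // ec drop_size_cat // in e6.
by rewrite e5 e6.
Qed.

Lemma tword_inj t t' : reduced t -> reduced t' -> tword t = tword t' -> t = t'.
Proof.
move=> h h' e.
have [] := @twl_inj (size (tword t)) [:: t] [:: t'] [::] [::].
- by rewrite twl1.
- by [].
- by rewrite /= h.
- by rewrite /= h'.
- by rewrite !twl1 e.
by move=> [].
Qed.

Lemma luk_ex n c w : (size w <= n)%N -> luk c w ->
  exists ts, [/\ size ts = c, all reduced ts & twl ts = w].
Proof.
elim: n c w => [|n IH] c [|a w] hs hl //.
- by exists [::]; move: hl => /= /eqP ->.
- by exists [::]; move: hl => /= /eqP ->.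
move: hl => /= /andP [cn0 hl].
have hs' : (size w <= n)%N by move: hs => /=.
have [ts' [h1 h2 h3]] := IH _ _ hs' hl.
move: h1; rewrite /nxt; case: (eqVneq a 0%N) => [->|an0] h1.
  exists (Node [::] :: ts'); split.
  - by rewrite /= h1; lia.
  - by rewrite /= h2.
  by rewrite twl_node /= h3.
have ha : (a.+1 <= size ts')%N by rewrite h1; lia.
exists (Node (take a.+1 ts') :: drop a.+1 ts'); split.
- by rewrite /= size_drop h1; lia.
- have : all reduced (take a.+1 ts' ++ drop a.+1 ts') by rewrite cat_take_drop.
  rewrite all_cat => /andP [ht hd].
  rewrite /= size_takel // ht hd andbT /=; lia.
by rewrite twl_node cat_take_drop size_takel // h3.
Qed.

Lemma tree_ex w : luk 1 w -> exists t, reduced t /\ tword t = w.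
Proof.
move=> h; have [[|t [|t' ts]] [hs hr hw]] := luk_ex (leqnn (size w)) h => //.
by exists t; move: hr hw => /= /andP [-> _]; rewrite twl1.
Qed.

Lemma tword_luk t : reduced t -> luk 1 (tword t).
Proof. by move=> h; rewrite -twl1; apply: (@luk_twl (size (twl [:: t]))) => //=; rewrite h. Qed.

Lemma tword_sumn t : (sumn (tword t) + 1 = leaves t)%N.
Proof. by have := @sumn_twl _ [:: t] (leqnn _); rewrite twl1 /= addn0. Qed.

Lemma tword_nz t : reduced t -> count pos (tword t) = internal t.
Proof.
by move=> h; have := @nz_twl _ [:: t] (leqnn _); rewrite twl1 /= addn0 h => ->.
Qed.

Lemma prime_pw t : reduced t -> prime_tree t = pw (tword t).
Proof.
case: t => cs; rewrite [reduced _]/= => /andP [hk hcs].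
case/lastP: cs hk hcs => [|cs0 c] hk hcs.
  by rewrite /pw.
case: cs0 hk hcs => [|c0 cs1] hk hcs.
  by move: hk; rewrite size_rcons.
set cs := rcons (c0 :: cs1) c.
have hlv : (2 <= leaves (Node cs))%N.
  have := @sumn_twl _ cs (leqnn _).
  rewrite /cs /= size_rcons /=; lia.
have -> : prime_tree (Node cs) = is_leaf c.
  by rewrite /prime_tree hlv /cs size_rcons last_rcons.
rewrite tword_node /cs size_rcons /= -/cs.
have hcs' := hcs; rewrite /cs -cats1 all_cat /= andbT in hcs'.
case/andP: hcs' => hcs0 hc.
rewrite -rcons_cons -cats1 twl_cat twl1.
have := tword_luk hc; case/lastP E: (tword c) => [|y b].
  by case: c E {hk hcs hlv cs} hc.
move=> /luk_last ->.
rewrite -rcons_cat -rcons_cons pw_rcons eqxx /=.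
have h0 : luk (size cs1).+1 (twl (c0 :: cs1)).
  by apply: (@luk_twl (size (twl (c0 :: cs1)))).
have -> : luk (size cs1).+1 (twl (c0 :: cs1) ++ y) = (y == [::]).
  apply/idP/eqP => [hy|->]; first exact: luk_pref h0 hy.
  by rewrite cats0.
case: c E {hc hcs hk hlv cs} => cs''.
rewrite tword_node /is_leaf => E.
have := congr1 size E; rewrite size_rcons /= => -[hy].
case: cs'' {E} hy => [|[c''] cs''] hy; first by rewrite twl_nil in hy; case: y hy.
by rewrite twl_node /= in hy; case: y hy.
Qed.

Fixpoint wl (L M : nat) : seq (seq nat) :=
  if L is L'.+1 then [::] :: [seq a :: w | a <- iota 0 M.+1, w <- wl L' M]
  else [:: [::]].

Lemma mem_wl L M (w : seq nat) :
  (w \in wl L M) = (size w <= L)%N && all (fun a => a <= M)%N w.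
Proof.
elim: L w => [|L IH] w; first by case: w.
change (wl L.+1 M) with ([::] :: [seq a :: w | a <- iota 0 M.+1, w <- wl L M]).
case: w => [|a w]; first by rewrite mem_head.
rewrite in_cons -[a :: w == [::]]/false orFb; apply/allpairsP/idP => [[[a' w'] [h1 h2 e]]|].
  rewrite mem_iota in h1; rewrite IH in h2; case: e => -> ->.
  move: h1 h2 => /= h1 /andP [h2 ->]; rewrite andbT; apply/andP; split; lia.
case/andP=> h1 /andP [h2 h3]; exists (a, w); split => //.
  rewrite mem_iota /=; lia.
rewrite IH; apply/andP; split; [move: h1 => /=; lia | exact: h3].
Qed.

Definition Wall (d : nat) : seq (seq nat) := undup (wl (2 * d).+1 d).

Lemma Wall_uniq d : uniq (Wall d). Proof. exact: undup_uniq. Qed.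

Lemma inWall w : luk 1 w -> w \in Wall (sumn w).
Proof.
move=> h; rewrite /Wall mem_undup mem_wl.
have := size_le w; rewrite (luk_zeros h) => hs.
apply/andP; split; first lia.
by have := letters_le w 0; rewrite addn0.
Qed.

Definition dec (w : seq nat) : tree :=
  epsilon (inhabits (Node [::])) (fun t => reduced t /\ tword t = w).

Lemma dec_spec w : luk 1 w -> reduced (dec w) /\ tword (dec w) = w.
Proof. by move=> h; exact: (epsilon_spec _ (fun t => reduced t /\ tword t = w) (tree_ex h)). Qed.

Lemma pw_luk w : pw w -> luk 1 w.
Proof.
case/lastP: w => [|v b] //; rewrite pw_rcons => /andP [/eqP -> hp].
case: v hp => [|a u] //= /andP [an0 hu].
rewrite /nxt (negbTE an0) add1n -addn1 -cats1.
by apply: luk_cat.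
Qed.

Lemma pw_nz w : pw w -> (0 < count pos w)%N.
Proof.
case/lastP: w => [|v b] //; rewrite pw_rcons => /andP [/eqP -> hp].
case: v hp => [|a u] //= /andP [an0 hu].
have ha : (0 < a)%N by rewrite lt0n.
by rewrite /pos ha.
Qed.

Definition Wb (n : nat) := [seq w <- Wall n | (sumn w == n) && pw w].

Lemma mem_Wb n w : (w \in Wb n) = (sumn w == n) && pw w.
Proof.
rewrite mem_filter; apply/andP/idP => [[]//|/andP [/eqP e h]].
by split; [rewrite e h eqxx | rewrite -e; apply: inWall; apply: pw_luk].
Qed.

Lemma In_map (f : seq nat -> tree) s t :
  List.In t (map f s) <-> exists2 x, x \in s & f x = t.
Proof.
elim: s => [|x s IH] /=; first by split=> // -[].
split.
  case=> [<-|/IH [y hy <-]]; first by exists x; rewrite ?mem_head.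
  by exists y => //; rewrite in_cons hy orbT.
case=> y; rewrite in_cons => /orP [/eqP -> ->|hy hf]; first by left.
by right; apply/IH; exists y.
Qed.

Lemma NoDup_map (f : seq nat -> tree) s :
  uniq s -> {in s &, injective f} -> List.NoDup (map f s).
Proof.
elim: s => [|x s IH] /=; first by constructor.
case/andP=> hx hs hf; constructor.
  move/In_map=> [y hy e]; move: hx; rewrite -(hf y x) ?hy //.
    by rewrite in_cons hy orbT.
  by rewrite mem_head.
apply: IH => // a b ha hb; apply: hf; rewrite in_cons ?ha ?hb orbT //.
Qed.

Lemma sum_eq_uniq (s : seq (seq nat)) (F : seq nat -> algC) w : uniq s ->
  \sum_(x <- s) F x * (x == w)%:R = (w \in s)%:R * F w.
Proof.
elim: s => [|x s IH] /=; first by rewrite big_nil mul0r.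
case/andP=> hx hs; rewrite big_cons IH // in_cons.
case: (eqVneq x w) => [<-|ne] /=.
  by rewrite (negbTE hx) mul0r addr0 mulr1 mul1r.
by rewrite mulr0 add0r.
Qed.

Lemma partb (kap : ser)
  (hk : forall w, kap w = (w == [:: 0%N])%:R - sgn w * (pw w)%:R) n : (0 < n)%N ->
  exists s : seq tree,
    List.NoDup s /\ (forall t, List.In t s <-> PST n t) /\
    forall w, homc n kap w =
      \sum_(t <- s) (-1) ^+ (internal t).-1 * (tword t == w)%:R.
Proof.
move=> n0; exists (map dec (Wb n)); split; last split.
- apply: NoDup_map; first by apply: filter_uniq; apply: Wall_uniq.
  move=> x y; rewrite !mem_Wb => /andP [_ /pw_luk /dec_spec [_ hx]].
  by move=> /andP [_ /pw_luk /dec_spec [_ hy]] e; rewrite -hx -hy e.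
- move=> t; rewrite In_map; split.
    case=> x; rewrite mem_Wb => /andP [/eqP hs hp] <-.
    have [hr hw] := dec_spec (pw_luk hp).
    split=> //; split; first by rewrite prime_pw // hw.
    by rewrite /tweight -tword_sumn hw addn1 hs.
  case=> hr [hp hw]; exists (tword t); last first.
    have [hr' hw'] := dec_spec (tword_luk hr).
    by apply: tword_inj.
  rewrite mem_Wb -prime_pw // hp andbT.
  by move: hw; rewrite /tweight -tword_sumn addn1 /= => ->.
move=> w; rewrite big_map.
rewrite (eq_big_seq (fun x => (-1) ^+ (count pos x).-1 * (x == w)%:R)); last first.
  move=> x; rewrite mem_Wb => /andP [_ /pw_luk /dec_spec [hr hw]].
  by rewrite -(tword_nz hr) hw.
rewrite sum_eq_uniq; last by apply: filter_uniq; apply: Wall_uniq.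
rewrite /homc hk mem_Wb; case: (eqVneq (sumn w) n) => [e|ne] /=; last by rewrite mul0r.
have -> : (w == [:: 0%N]) = false.
  by apply/negbTE; apply: contraTneq n0 => ew; rewrite -e ew.
rewrite sub0r /sgn; case hp: (pw w); last by rewrite !mulr0 oppr0 mul0r.
have := pw_nz hp; case: (count pos w) => [|k] // _.
by rewrite mulr1 mul1r exprS mulN1r opprK.
Qed.

Fixpoint wds (v : seq nat) (m : nat) {struct v} : seq (seq nat) :=
  match v with
  | [::] => [:: nseq m 0%N]
  | a :: v' =>
    let fix aux (m : nat) : seq (seq nat) :=
      match m with
      | 0%N => [::]
      | m'.+1 => map (cons a) (wds v' (m'.+1 + a)) ++ map (cons 0%N) (aux m')
      end in aux m
  end.

Lemma wds_cons0 a v : wds (a :: v) 0 = [::]. Proof. by []. Qed.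
Lemma wds_consS a v m : wds (a :: v) m.+1 =
  map (cons a) (wds v (m.+1 + a)) ++ map (cons 0%N) (wds (a :: v) m).
Proof. by []. Qed.

Lemma mem_map_cons (a b : nat) y (W : seq (seq nat)) :
  (b :: y \in map (cons a) W) = (b == a) && (y \in W).
Proof.
apply/mapP/andP => [[z hz [-> ->]]|[/eqP -> hy]]; first by rewrite eqxx.
by exists y.
Qed.

Lemma nseq_mem (y : seq nat) m : (y == nseq m 0%N) = (filter pos y == [::]) && luk m y.
Proof.
elim: y m => [|b y IH] [|m] //=.
- by rewrite andbF.
- rewrite eqseq_cons IH /nxt /pos /=; case: (eqVneq b 0%N) => [->|bn0] //=.
  by have -> : (0 < b)%N by rewrite lt0n.
Qed.

Lemma mem_wds v m (y : seq nat) : pos_word v ->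
  (y \in wds v m) = (filter pos y == v) && luk m y.
Proof.
elim: v m y => [|a v IH] m y hv.
  by rewrite /= in_cons in_nil orbF nseq_mem.
have /andP [ha {}hv] : (0 < a)%N && pos_word v := hv.
elim: m y => [|m IHm] y.
  by rewrite wds_cons0 in_nil luk0; case: y => [|b y] //=; rewrite andbF.
rewrite wds_consS mem_cat.
case: y => [|b y].
  by apply/negbTE; rewrite negb_or; apply/andP; split; apply/negP => /mapP [z _].
rewrite !mem_map_cons IH // IHm /= /nxt /pos.
case: (eqVneq b 0%N) => [->|bn0] /=.
  have -> : (0 == a) = false by apply/negbTE; rewrite eq_sym -lt0n.
  by [].
have -> : (0 < b)%N by rewrite lt0n.
rewrite eqseq_cons orbF -andbA; case: eqP => [->|] //.
Qed.

Lemma wds_uniq v m : pos_word v -> uniq (wds v m).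
Proof.
elim: v m => [|a v IH] m hv //.
have /andP [ha hv'] : (0 < a)%N && pos_word v := hv.
elim: m => [|m IHm] //.
rewrite wds_consS cat_uniq !map_inj_uniq ?IH ?IHm //; try by move=> x y [].
rewrite andbT; apply/hasPn => z /mapP [y _ ->].
by rewrite mem_map_cons; apply/negP => /andP [/eqP h _]; move: ha; rewrite -h.
Qed.

Definition Z v m : nat := size (wds v m).

Lemma Z0 v : Z v 0 = (v == [::]). Proof. by case: v. Qed.
Lemma Znil m : Z [::] m = 1%N. Proof. by []. Qed.
Lemma ZS v m : Z v m.+1 = (Z v m + (if v is a :: v' then Z v' (m.+1 + a) else 0))%N.
Proof.
case: v => [|a v]; first by rewrite !Znil.
by rewrite /Z wds_consS size_cat !size_map addnC.
Qed.

Definition Fterm m x j : algC :=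
  (-1) ^+ j * (Z (take j x) m)%:R * ('C(m + sumn (take j x), size x - j))%:R.
Definition F m x : algC := \sum_(j < (size x).+1) Fterm m x j.

Lemma F_nil m : F m [::] = 1.
Proof. by rewrite /F big_ord_recl big_ord0 /Fterm /= Znil bin0 !mul1r addr0. Qed.

Lemma F0 x : F 0 x = (x == [::])%:R.
Proof.
case: x => [|b x]; first by rewrite F_nil.
rewrite /F (big_recl_nat (Fterm 0 (b :: x))) big1.
  by rewrite /Fterm /= bin0n /= mulr0 addr0.
by move=> i _; rewrite /Fterm /= Z0 /= mulr0 mul0r.
Qed.

Definition G1 m x j : algC :=
  (-1) ^+ j * (Z (take j x) m)%:R * ('C(m.+1 + sumn (take j x), size x - j))%:R.
Definition Zc v m : algC := if v is a :: v' then (Z v' (m.+1 + a))%:R else 0.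
Definition G2 m x j : algC :=
  (-1) ^+ j * Zc (take j x) m * ('C(m.+1 + sumn (take j x), size x - j))%:R.

Lemma FS m x : F m.+1 x = \sum_(j < (size x).+1) G1 m x j + \sum_(j < (size x).+1) G2 m x j.
Proof.
rewrite /F -big_split; apply: eq_bigr => j _.
rewrite /Fterm /G1 /G2 ZS natrD mulrDr mulrDl; congr (_ + _).
by case: (take j x) => [|? ?] /=; rewrite ?mulr0 ?mul0r.
Qed.

Lemma LB m a x : \sum_(j < (size (a :: x)).+1) G2 m (a :: x) j = - F (m.+1 + a) x.
Proof.
rewrite (big_recl_nat (G2 m (a :: x))) {1}/G2 /= mulr0 mul0r add0r.
rewrite /F -sumrN; apply: eq_bigr => j _.
by rewrite /G2 /Fterm /= exprS mulN1r !mulNr addnA subSS.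
Qed.

Lemma LA m x b : \sum_(j < (size (rcons x b)).+1) G1 m (rcons x b) j =
  F m (rcons x b) + F m x.
Proof.
have hs := size_rcons x b.
rewrite /F hs (big_recr_nat (G1 m (rcons x b))) (big_recr_nat (Fterm m (rcons x b))).
rewrite addrAC; congr (_ + _); last first.
  by rewrite /G1 /Fterm hs subnn !bin0.
rewrite -big_split; apply: eq_bigr => j _ /=.
have hj : (j <= size x)%N by have := ltn_ord j; lia.
have ht : take j (rcons x b) = take j x by rewrite -cats1 takel_cat.
rewrite /G1 /Fterm ht hs subSn // addSn binS natrD mulrDr.
by [].
Qed.

Lemma F_eq n x m : (size x <= n)%N -> F m x = (x == [::])%:R.
Proof.
elim: n x m => [|n IH] [|a x] m hs; rewrite ?F_nil //.
elim: m => [|m IHm]; first by rewrite F0.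
rewrite FS LB IH; last by move: hs => /=; lia.
rewrite lastI LA -lastI IHm IH; last by rewrite size_belast; move: hs => /=; lia.
have -> : (belast a x == [::]) = (x == [::]) by case: x {hs IHm}.
by rewrite /= add0r subrr.
Qed.

Definition Kp (u : seq nat) : algC :=
  (u == [::])%:R - (-1) ^+ (size u) * (if u is a :: u' then (Z u' a)%:R else 0).

Definition T (K : ser) u : algC :=
  \sum_(i < (size u).+1) K (take i u) * ('C(sumn (take i u), size u - i))%:R.

Lemma T_Kp u : T Kp u = (size u <= 1)%N%:R.
Proof.
case: u => [|a u].
  by rewrite /T big_ord_recl big_ord0 /Kp /= mulr0 subr0 subn0 bin0 mul1r addr0.
rewrite /T (big_recl_nat (fun i => Kp (take i (a :: u)) * ('C(sumn (take i (a :: u)), size (a :: u) - i))%:R)).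
rewrite /= bin0n /= mulr0 add0r.
rewrite ltnS leqn0 size_eq0.
have := @F_eq (size u) u a (leqnn _); rewrite /F => <-.
apply: eq_bigr => j _.
have hj : (j <= size u)%N by have := ltn_ord j; lia.
rewrite /Kp /Fterm /= size_takel // sub0r exprS mulN1r mulNr opprK subSS.
by case: (take j u).
Qed.

Lemma pow_sigma n x : ser_pow sigma1 n x = ('C(n, size x))%:R.
Proof.
elim: n x => [|n IH] x.
  by rewrite /= /ser_one bin0n size_eq0.
rewrite [ser_pow _ _ _]/= /ser_mul.
under eq_bigr => i _ do rewrite IH.
case: x => [|b x].
  by rewrite big_ord_recl big_ord0 /sigma1 /= !bin0 mulr1 addr0.
rewrite (big_recl_nat (fun i => sigma1 (take i (b :: x)) * ('C(n, size (drop i (b :: x))))%:R)).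
rewrite (big_recl_nat (fun i => sigma1 (take i.+1 (b :: x)) * ('C(n, size (drop i.+1 (b :: x))))%:R)).
rewrite big1 ?addr0.
  by rewrite /sigma1 /= take0 drop0 !mul1r binS natrD addrC.
move=> i _; rewrite /sigma1 /= size_take.
have := ltn_ord i; case: ifP => _ h; first by rewrite ltnS ltn0 mul0r.
by move: i h; case: x => [|c x] [i hi] //= _; rewrite mul0r.
Qed.

Lemma sumn_take i (u : seq nat) : (sumn (take i u) <= sumn u)%N.
Proof. by rewrite -{2}(cat_take_drop i u) sumn_cat leq_addr. Qed.

Lemma K_sum K (u : seq nat) :
  \sum_(n < (sumn u).+1) ser_mul (homc n K) (ser_pow sigma1 n) u = T K u.
Proof.
rewrite /ser_mul exchange_big; apply: eq_bigr => i _.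
have hi : (sumn (take i u) < (sumn u).+1)%N by rewrite ltnS sumn_take.
rewrite (bigD1 (Ordinal hi)) //= big1 ?addr0.
  by rewrite /homc eqxx pow_sigma size_drop.
move=> n /eqP ne; rewrite /homc; case: eqP => [e|]; last by rewrite mul0r.
by exfalso; apply: ne; apply: val_inj; rewrite /= e.
Qed.

Lemma pos_take i u : pos_word u -> pos_word (take i u).
Proof. by rewrite /pos_word -{1}(cat_take_drop i u) all_cat => /andP []. Qed.

Lemma K_unique K : K_def K -> forall u, pos_word u -> K u = Kp u.
Proof.
case=> K0 KS.
suff H : forall n u, (size u <= n)%N -> pos_word u -> K u = Kp u.
  by move=> u; apply: H (leqnn _).
elim=> [|n IH] u hs hu.
  by case: u hs hu => // _ _; rewrite K0 /Kp /= mulr0 subr0.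
case: u hs hu => [|a u] hs hu; first by rewrite K0 /Kp /= mulr0 subr0.
have h1 := KS _ hu; rewrite K_sum in h1.
have h2 := T_Kp (a :: u).
rewrite /T (big_recr_nat (fun i => K (take i (a :: u)) * ('C(sumn (take i (a :: u)), size (a :: u) - i))%:R)) in h1.
rewrite /T (big_recr_nat (fun i => Kp (take i (a :: u)) * ('C(sumn (take i (a :: u)), size (a :: u) - i))%:R)) in h2.
move: h1 h2; rewrite /sigma1 => ->.
rewrite [X in _ = X + _](eq_bigr (fun i : 'I_(size (a :: u)) => Kp (take i (a :: u)) * ('C(sumn (take i (a :: u)), size (a :: u) - i))%:R)); last first.
  move=> i _; rewrite IH //; last by apply: pos_take.
  rewrite size_take; have := ltn_ord i; move: hs => /=; case: ifP; lia.
by move/addrI; rewrite take_size subnn bin0 !mulr1 => ->.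
Qed.

Lemma sumn_filter_pos (w : seq nat) : sumn (filter pos w) = sumn w.
Proof. by elim: w => [|a w IH] //=; rewrite /pos; case: a => [|a] //=; rewrite IH. Qed.

Lemma sum_count_pred (s : seq (seq nat)) (P Q : pred (seq nat)) :
  \sum_(w <- s | P w) ((Q w)%:R : algC) = (count (fun w => P w && Q w) s)%:R.
Proof.
elim: s => [|x s IH]; first by rewrite big_nil.
rewrite big_cons /= natrD IH; case: (P x) => //=; by rewrite add0r.
Qed.

Lemma filter_prime a (y : seq nat) : (0 < a)%N ->
  filter pos (a :: rcons y 0%N) = a :: filter pos y.
Proof. by move=> ha; rewrite /= /pos ha filter_rcons. Qed.

Lemma count_pw u : pos_word u ->
  count (fun w => (filter pos w == u) && pw w) (Wall (sumn u)) =
  (if u is a :: u' then Z u' a else 0)%N.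
Proof.
case: u => [|a u] hu.
  rewrite (eq_count (a2 := pred0)) ?count_pred0 // => w /=.
  apply/negbTE/andP => -[/eqP hf /pw_nz]; by rewrite -size_filter hf.
have /andP [ha hu'] : (0 < a)%N && pos_word u := hu.
rewrite -size_filter (perm_size (s2 := map (fun y => a :: rcons y 0%N) (wds u a))).
  by rewrite size_map.
apply: uniq_perm.
- by apply: filter_uniq; apply: Wall_uniq.
- rewrite map_inj_uniq ?wds_uniq // => y1 y2 [] /rcons_inj [].
  by [].
move=> w; rewrite mem_filter; apply/idP/mapP.
  case/andP => /andP [hf hp] _.
  case/lastP: w hf hp => [|v b] hf hp //.
  move: hp; rewrite pw_rcons => /andP [/eqP eb hpv]; subst b.
  case: v hf hpv => [|a' y] // hf /andP [ha' hy].
  have ha'' : (0 < a')%N by rewrite lt0n.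
  move: hf; rewrite rcons_cons filter_prime // eqseq_cons => /andP [/eqP ea hf]; subst a'.
  by exists y => //; rewrite mem_wds // hf hy.
case=> y; rewrite mem_wds // => /andP [hfy hly] ->.
have hp : pw (a :: rcons y 0%N).
  by rewrite -rcons_cons pw_rcons eqxx /= hly andbT -lt0n.
have hf : filter pos (a :: rcons y 0%N) = a :: u by rewrite filter_prime // (eqP hfy).
rewrite hf eqxx hp andTb.
by rewrite -hf sumn_filter_pos; apply: inWall; apply: pw_luk.
Qed.

Lemma in_Wall0 d : [:: 0%N] \in Wall d.
Proof. rewrite /Wall mem_undup mem_wl /=; lia. Qed.

Lemma parta (kap K : ser)
  (hk : forall w, kap w = (w == [:: 0%N])%:R - sgn w * (pw w)%:R) :
  K_def K -> specializes_to kap K.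
Proof.
move=> hK u hu; exists (Wall (sumn u)); split; last split.
- move=> w hf; rewrite hk => hne.
  have hl : luk 1 w.
    case: (eqVneq w [:: 0%N]) => [->|ne] //.
    case hp: (pw w); first exact: pw_luk hp.
    by move: hne; rewrite (negbTE ne) hp mulr0 subrr eqxx.
  by rewrite -hf sumn_filter_pos; apply: inWall.
- exact: Wall_uniq.
rewrite (K_unique hK hu).
under eq_bigr => w _ do rewrite hk.
rewrite sumrB sum_count_pred.
rewrite (eq_bigr (fun w => (-1) ^+ size u * (pw w)%:R)); last first.
  by move=> w /eqP hw; rewrite /sgn -size_filter hw.
rewrite -mulr_sumr sum_count_pred.
have E := count_pw hu; rewrite /pos in E; rewrite E.
rewrite /Kp; congr (_ - _ * _); last by case: u {hu E}.
rewrite (eq_count (a2 := fun w => (u == [::]) && (w == [:: 0%N]))); last first.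
  move=> w /=; case: (eqVneq w [:: 0%N]) => [->|]; rewrite ?andbF //=.
  by rewrite eq_sym.
case: (u == [::]) => /=; last by rewrite count_pred0.
by rewrite (count_uniq_mem _ (Wall_uniq _)) in_Wall0.
Qed.

Unset Implicit Arguments.

Theorem mainTheorem2 (g etainv K : ser) :
  (* g = g_c is the inverse of f_c in the Schroeder group *)
  in_GS g ->
  (forall w, gcomp fc g w = letter 0 w) ->
  (forall w, gcomp g fc w = letter 0 w) ->
  (* etainv is the multiplicative inverse of eta, where g = eta S_0 *)
  (forall w, ser_mul (eta_of g) etainv w = ser_one w) ->
  (forall w, ser_mul etainv (eta_of g) w = ser_one w) ->
  (* K = 1 + sum_{n>=1} K_n in Sym-hat *)
  K_def K ->
  specializes_to (kappa_of etainv) K /\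
  (forall n : nat, (0 < n)%N ->
     exists s : seq tree,
       List.NoDup s /\ (forall t, List.In t s <-> PST n t) /\
       forall w, homc n (kappa_of etainv) w =
         \sum_(t <- s) (-1) ^+ (internal t).-1 * (tword t == w)%:R).
Proof.
move=> h1 h2 _ _ h5 hK.
have hq := etainv_Q h1 h2 h5.
have hk : forall w, kappa_of etainv w = (w == [:: 0%N])%:R - sgn w * (pw w)%:R.
  move=> w; rewrite -kap_formula /kappa_of /ser_mul; apply: eq_bigr => i _.
  by rewrite hq.
split; first exact: parta hk hK.
by move=> n hn; exact: (@partb _ hk n hn).
Qed.
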